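(* Let $G=(V,E)$ be an undirected graph in which every vertex has degree at most $d$, let $\pi$ be a uniformly random ordering of $V$, and let $P$ be the $\delta$-prefix of $V$ with respect to $\pi$. If $\delta\le k/d$, then the expected number of vertices in $P$ incident to at least one internal edge of $P$ is $O(k|P|)$.
   Context: For $0<\delta\le1$, the $\delta$-prefix of $V$ with respect to $\pi$ is the set of the $\delta|V|$ earliest vertices in $\pi$. The internal edges of $P$ are the edges of $G$ with both endpoints in $P$. *)

(* Defs.v *)
From HB Require Import structures.
From mathcomp Require Import all_boot all_order all_algebra.
From mathcomp Require Import reals.
Set Implicit Arguments. Unset Strict Implicit. Unset Printing Implicit Defensive.
Import Order.TTheory GRing.Theory Num.Theory.
Local Open Scope ring_scope.

Definition simple_graph (V : finType) (e : rel V) : Prop :=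
  symmetric e /\ irreflexive e.

Definition max_degree_le (V : finType) (e : rel V) (d : nat) : Prop :=
  forall v : V, (#|[set u | e v u]| <= d)%N.

(* orderings of V: bijections V -> {0,..,|V|-1}; pi v is the position of v *)
Definition orderings (V : finType) : {set {ffun V -> 'I_#|V|}} :=
  [set f : {ffun V -> 'I_#|V|} | injectiveb f].

Definition prefix (V : finType) (pi : {ffun V -> 'I_#|V|}) (m : nat) : {set V} :=
  [set v | (pi v < m)%N].

Definition prefix_size (R : realType) (V : finType) (delta : R) : nat :=
  `|Num.floor (delta * #|V|%:R)|%N.

Definition internal_vertices (V : finType) (e : rel V) (P : {set V}) : {set V} :=
  [set v in P | [exists u in P, e v u]].

Definition expected_internal (R : realType) (V : finType) (e : rel V) (m : nat) : R :=
  (\sum_(pi in orderings V) (#|internal_vertices e (prefix pi m)|)%:R)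
    / (#|orderings V|)%:R.

(* Main.v *)
Require Import Defs.
From HB Require Import structures.
From mathcomp Require Import all_boot all_order all_algebra.
From mathcomp Require Import fingroup perm.
From mathcomp Require Import ring lra.
From mathcomp Require Import reals.
Import Order.TTheory GRing.Theory Num.Theory.
Set Implicit Arguments. Unset Strict Implicit. Unset Printing Implicit Defensive.

Lemma card_setE (T : finType) (P : pred T) : #|[set x | P x]| = \sum_x (P x : nat).
Proof.
rewrite -sum1_card big_mkcond; apply: eq_bigr => x _; rewrite inE; by case: (P x).
Qed.

Definition Ncnt (V : finType) (m : nat) (v u : V) :=
  #|[set pi in orderings V | (pi v < m) && (pi u < m)]|.

Lemma exch (V : finType) m (Q : pred (V * V)) :
  \sum_(pi in orderings V) #|[set p | Q p && ((pi p.1 < m) && (pi p.2 < m))]|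
  = \sum_(p | Q p) Ncnt m p.1 p.2.
Proof.
transitivity (\sum_(pi in orderings V) \sum_(p | Q p) ((pi p.1 < m) && (pi p.2 < m) : nat)).
  apply: eq_bigr => pi _; rewrite card_setE [RHS]big_mkcond; apply: eq_bigr => p _.
  by case: (Q p).
rewrite exchange_big; apply: eq_bigr => p _.
rewrite /Ncnt card_setE [LHS]big_mkcond; apply: eq_bigr => pi _.
by case: (pi \in orderings V).
Qed.

Lemma diag_notin (V : finType) (A : {set V}) x y : x != y -> (x,y) \notin [set (z, z) | z in A].
Proof. move=> xy; apply/negP; case/imsetP => z _ [e1 e2]; by rewrite e1 e2 eqxx in xy. Qed.

Lemma diag_in (V : finType) (A : {set V}) x : x \in A -> (x,x) \in [set (z, z) | z in A].
Proof. by move=> xA; apply/imsetP; exists x. Qed.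

Lemma offdiag (V : finType) (A : {set V}) :
  #|[set p : V * V | [&& p.1 != p.2, p.1 \in A & p.2 \in A]]| = #|A| * (#|A| - 1).
Proof.
have -> : [set p : V * V | [&& p.1 != p.2, p.1 \in A & p.2 \in A]] = setX A A :\: [set (z, z) | z in A].
  apply/setP => [[x y]]; rewrite in_set in_setD in_setX /=.
  apply/idP/idP.
    case/and3P => xy xA yA; by rewrite xA yA andbT diag_notin.
  case/and3P => nD xA yA; rewrite xA yA !andbT.
  by apply: contraNneq nD => ->; apply: diag_in.
have sD : [set (z, z) | z in A] \subset setX A A.
  by apply/subsetP => p /imsetP[x xA ->]; rewrite in_setX /= xA.
rewrite cardsD (setIidPr sD) cardsX card_imset; last by move=> x y [].
by rewrite mulnBr muln1.
Qed.

Lemma ord_inj (V : finType) (pi : {ffun V -> 'I_#|V|}) : pi \in orderings V -> injective pi.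
Proof. by rewrite inE => /injectiveP. Qed.

Lemma exists_perm (V : finType) (v u v' u' : V) : v != u -> v' != u' ->
  exists s : {perm V}, s v' = v /\ s u' = u.
Proof.
move=> vu vu'.
pose s1 := tperm v' v. pose w := s1 u'.
have wv : w != v.
  apply: contra vu' => /eqP hw; apply/eqP; apply: (@perm_inj _ s1).
  by rewrite -/w hw /s1 tpermL.
exists (s1 * tperm w u)%g; rewrite !permM /s1 tpermL -/w tpermL; split => //.
by rewrite tpermD // eq_sym.
Qed.

Lemma N_le (V : finType) m (v u v' u' : V) : v != u -> v' != u' ->
  Ncnt m v u <= Ncnt m v' u'.
Proof.
move=> vu vu'; have [s [sv su]] := exists_perm vu vu'.
pose Phi (pi : {ffun V -> 'I_#|V|}) := [ffun x => pi (s x)].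
have Phi_inj : injective Phi.
  move=> p1 p2 /ffunP h; apply/ffunP => y.
  have := h (s^-1 y)%g; by rewrite !ffunE permKV.
rewrite /Ncnt -(card_imset _ Phi_inj); apply: subset_leq_card.
apply/subsetP => q /imsetP[pi]; rewrite !inE => /andP[opi hm] ->.
rewrite !ffunE sv su hm andbT.
apply/injectiveP => x y; rewrite !ffunE => /(ord_inj (pi:=pi)).
rewrite inE opi => /(_ isT) h; exact: (perm_inj h).
Qed.

Lemma sum_const_cond (T : finType) (P : pred T) c : \sum_(i | P i) c = #|[set i | P i]| * c.
Proof. by rewrite sum_nat_const cardsE. Qed.

Lemma card_ltm n m : m <= n -> #|[set i : 'I_n | i < m]| = m.
Proof.
move=> mn.
have -> : [set i : 'I_n | i < m] = [set widen_ord mn j | j in 'I_m].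
  apply/setP => i; rewrite inE; apply/idP/idP.
    move=> im; apply/imsetP; exists (Ordinal im) => //; exact: val_inj.
  by case/imsetP => j _ ->; rewrite /= ltn_ord.
rewrite card_imset ?card_ord // => a b /(congr1 val) /= h; exact: val_inj.
Qed.

Lemma card_prefix (V : finType) (pi : {ffun V -> 'I_#|V|}) m :
  pi \in orderings V -> m <= #|V| -> #|Defs.prefix pi m| = m.
Proof.
move=> opi mn; have pinj := ord_inj opi.
have [g gK Kg] : bijective pi by apply: (inj_card_bij pinj); rewrite card_ord.
rewrite -(card_imset _ pinj) -[RHS](card_ltm mn); apply: eq_card => i.
rewrite [in RHS]inE; apply/idP/idP.
  by case/imsetP => v; rewrite inE => h ->.
by move=> im; apply/imsetP; exists (g i); rewrite ?inE Kg.
Qed.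

Lemma pairs_eq (V : finType) m (v u : V) : m <= #|V| -> v != u ->
  Ncnt m v u * (#|V| * (#|V| - 1)) = #|orderings V| * (m * (m - 1)).
Proof.
move=> mn vu.
have h1 : \sum_(p : V * V | p.1 != p.2) Ncnt m p.1 p.2 = #|V| * (#|V| - 1) * Ncnt m v u.
  rewrite (eq_bigr (fun=> Ncnt m v u)); last first.
    move=> p pne; apply/eqP; rewrite eqn_leq !N_le //.
  rewrite sum_const_cond -cardsT -offdiag; congr (_ * _).
  by apply: eq_card => p; rewrite !inE !andbT.
rewrite mulnC -h1 -exch (eq_bigr (fun=> m * (m - 1))); last first.
  move=> pi opi; rewrite -[in RHS](card_prefix opi mn) -offdiag.
  by apply: eq_card => p; rewrite !inE.
by rewrite sum_nat_const.
Qed.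

Lemma internal_le (V : finType) (e : rel V) (pi : {ffun V -> 'I_#|V|}) m :
  #|internal_vertices e (Defs.prefix pi m)| <=
  #|[set p : V * V | e p.1 p.2 && ((pi p.1 < m) && (pi p.2 < m))]|.
Proof.
apply: leq_trans (leq_imset_card fst _).
apply: subset_leq_card; apply/subsetP => v; rewrite !inE => /andP[vm /existsP[u]].
rewrite !inE => /andP[um evu]; apply/imsetP; exists (v, u) => //.
by rewrite !inE /= evu vm um.
Qed.

Lemma edges_le (V : finType) (e : rel V) d : max_degree_le e d ->
  #|[set p : V * V | e p.1 p.2]| <= #|V| * d.
Proof.
move=> hd; rewrite card_setE -(pair_bigA _ (fun v u => (e v u : nat))) /=.
rewrite -sum_nat_const; apply: leq_sum => v _.
have := hd v; rewrite card_setE; apply: leq_trans; by rewrite leqnn.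
Qed.

Lemma S_bound (V : finType) (e : rel V) d m : simple_graph e -> max_degree_le e d ->
  m <= #|V| ->
  (\sum_(pi in orderings V) #|internal_vertices e (Defs.prefix pi m)|) * (#|V| * (#|V| - 1))
  <= #|V| * d * (#|orderings V| * (m * (m - 1))).
Proof.
move=> [esym eirr] hd mn.
set c := #|V| * (#|V| - 1).
apply: (@leq_trans ((\sum_(pi in orderings V)
   #|[set p : V * V | e p.1 p.2 && ((pi p.1 < m) && (pi p.2 < m))]|) * c)).
  by rewrite leq_mul2r; apply/orP; right; apply: leq_sum => pi _; apply: internal_le.
rewrite (exch _ (fun p : V * V => e p.1 p.2)) big_distrl /=.
rewrite (eq_bigr (fun=> #|orderings V| * (m * (m - 1)))); last first.
  move=> p epq; apply: pairs_eq mn _.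
  by apply: contraTneq epq => ->; rewrite eirr.
rewrite sum_const_cond leq_mul2r; apply/orP; right; exact: edges_le.
Qed.

Lemma small_internal (V : finType) (e : rel V) P : #|V| <= 1 -> irreflexive e ->
  #|internal_vertices e P| = 0.
Proof.
move=> h eirr; apply/eqP; rewrite cards_eq0; apply/eqP/setP => v; rewrite !inE.
apply/negP => /andP[_ /existsP[u /andP[_ evu]]].
have /fintype_le1P hall := h; by move: evu; rewrite (hall v u) eirr.
Qed.

Local Open Scope ring_scope.

Theorem lemma9 (R : realType) :
  exists C : R, 0 < C /\
  forall (V : finType) (e : rel V) (d : nat) (k delta : R),
    simple_graph e -> max_degree_le e d ->
    0 < k -> 0 < delta -> delta <= 1 ->
    delta <= k / d%:R ->
    expected_internal R e (prefix_size V delta)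
      <= C * k * (prefix_size V delta)%:R.
Proof.
exists 1; split; first exact: ltr01.
move=> V e d k delta hg hd k0 d0 d1 hdk.
rewrite mul1r /expected_internal -natr_sum.
set m := prefix_size V delta.
set n := #|V|.
set O := #|orderings V|.
set S := (\sum_(pi in orderings V) _)%N.
have dpos : (0 < d)%N.
  case: (posnP d) => [dz|//]; move: hdk; rewrite dz invr0 mulr0 => h.
  by have := lt_le_trans d0 h; rewrite ltxx.
have Dpos : 0 < d%:R :> R by rewrite ltr0n.
have hdk' : delta * d%:R <= k by rewrite -ler_pdivlMr.
have mZ : (m%:Z) = Num.floor (delta * n%:R).
  rewrite /m /prefix_size gez0_abs // floor_ge0; apply: mulr_ge0; [exact: ltW | exact: ler0n].
have hm : m%:R <= delta * n%:R :> R.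
  have -> : m%:R = (m%:Z)%:~R :> R by [].
  rewrite mZ; exact: floor_le.
have mn : (m <= n)%N.
  rewrite -(ler_nat R); apply: le_trans hm _; apply: ler_piMl => //.
have [Sz|Snz] := eqVneq S 0%N.
  rewrite Sz mulr0n mul0r; apply: mulr_ge0; [exact: ltW | exact: ler0n].
have n2 : (1 < n)%N.
  rewrite ltnNge; apply/negP => n1; move/eqP: Snz; apply.
  by rewrite /S big1 // => pi _; rewrite small_internal //; case: hg.
have m2 : (1 < m)%N.
  rewrite ltnNge; apply/negP => m1; move/eqP: Snz; apply.
  have := S_bound hg hd mn; rewrite -/n -/S.
  have -> : (m * (m - 1) = 0)%N by case: (m) m1 => [|[|]].
  rewrite !muln0 leqn0 muln_eq0 => /orP[/eqP //|].
  by rewrite muln_eq0; case: (n) n2 => [|[|]].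
have [Oz|Onz] := posnP O.
  rewrite Oz mulr0n invr0 mulr0; apply: mulr_ge0; [exact: ltW | exact: ler0n].
rewrite ler_pdivrMr ?ltr0n //.
have hS := S_bound hg hd mn; rewrite -/n -/S -/O -(ler_nat R) !natrM !natrB ?(ltnW n2) ?(ltnW m2) // in hS.
set N := n%:R in hS hm *; set M := m%:R in hS hm *; set D := d%:R in hS hdk' Dpos *.
set Sv := S%:R in hS *; set Ov := O%:R in hS *.
have N2 : 2 <= N by rewrite /N (ler_nat R 2).
have M2 : 2 <= M by rewrite /M (ler_nat R 2).
have MN : M <= N by rewrite /M /N ler_nat.
have O1 : 1 <= Ov by rewrite /Ov (ler_nat R 1).
have Sv0 : 0 <= Sv by rewrite /Sv ler0n.
have key1 : D * (M - 1) * N <= D * M * (N - 1) by nra.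
have key2 : D * M * (N - 1) <= k * N * (N - 1).
  have NN0 : 0 <= N * (N - 1) by apply: mulr_ge0; lra.
  have DN0 : 0 <= D * (N - 1) by apply: mulr_ge0; lra.
  have e1 : M * (D * (N - 1)) <= delta * N * (D * (N - 1)) by rewrite ler_wpM2r.
  have e2 : delta * D * (N * (N - 1)) <= k * (N * (N - 1)) by rewrite ler_wpM2r.
  lra.
have key : D * (M - 1) <= k * (N - 1).
  have : D * (M - 1) * N <= k * (N - 1) * N by nra.
  rewrite ler_pM2r //; lra.
have : Sv * (N * (N - 1)) <= k * M * Ov * (N * (N - 1)).
  apply: le_trans hS _.
  have : D * (M - 1) * (N * M * Ov) <= k * (N - 1) * (N * M * Ov).
    rewrite ler_pM2r //; apply: mulr_gt0; first apply: mulr_gt0; lra.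
  nra.
rewrite ler_pM2r //; nra.
Qed.
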